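(* If $K$ is a smooth convex domain, then its depth satisfies $h_K>0$.
   Context: A convex domain is a compact convex subset $K\subset\mathbb{C}$ with nonempty interior; it is smooth if at each boundary point there is a unique supporting line. A unit vector $\nu$ is an outer normal to $K$ at $\zeta\in\partial K$ if $\mathrm{Re}((z-\zeta)\overline{\nu})\le 0$ for all $z\in K$; then $(\zeta+\nu\mathbb{R})\cap K=[\zeta,\zeta-h\nu]$ with $h\ge0$. The local depth $h_K(\zeta)$ is the maximum of such $h$ over all outer unit normals at $\zeta$, and the depth is $h_K:=\inf_{\zeta\in\partial K}h_K(\zeta)$. *)

(* Defs.v *)
(* the complex plane C is modelled as R * R. *)
From Stdlib Require Import Reals.
Open Scope R_scope.

Definition pt := (R * R)%type.

Definition padd (z w : pt) : pt := (fst z + fst w, snd z + snd w).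
Definition psub (z w : pt) : pt := (fst z - fst w, snd z - snd w).
Definition pscal (t : R) (z : pt) : pt := (t * fst z, t * snd z).
(* Re (z * conj w) *)
Definition dot (z w : pt) : R := fst z * fst w + snd z * snd w.
Definition pnorm (z : pt) : R := sqrt (dot z z).
Definition dist (z w : pt) : R := pnorm (psub z w).

Definition interior (K : pt -> Prop) (z : pt) : Prop :=
  exists r, 0 < r /\ forall w, dist w z < r -> K w.
Definition closure (K : pt -> Prop) (z : pt) : Prop :=
  forall r, 0 < r -> exists w, K w /\ dist w z < r.
Definition boundary (K : pt -> Prop) (z : pt) : Prop :=
  closure K z /\ ~ interior K z.

Definition closed_set (K : pt -> Prop) : Prop := forall z, closure K z -> K z.
Definition bounded_set (K : pt -> Prop) : Prop :=
  exists M, forall z, K z -> pnorm z <= M.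
(* compact subset of C = R^2 (Heine-Borel) *)
Definition compact_set (K : pt -> Prop) : Prop := closed_set K /\ bounded_set K.
Definition convex_set (K : pt -> Prop) : Prop :=
  forall z w t, K z -> K w -> 0 <= t <= 1 ->
    K (padd (pscal (1 - t) z) (pscal t w)).

Definition convex_domain (K : pt -> Prop) : Prop :=
  compact_set K /\ convex_set K /\ exists z, interior K z.

Definition outer_normal (K : pt -> Prop) (zeta nu : pt) : Prop :=
  pnorm nu = 1 /\ forall z, K z -> dot (psub z zeta) nu <= 0.

(* smooth: at each boundary point there is a unique supporting line;
   supporting lines at zeta correspond to outer unit normals up to sign *)
Definition smooth (K : pt -> Prop) : Prop :=
  forall zeta, boundary K zeta ->
    forall nu1 nu2, outer_normal K zeta nu1 -> outer_normal K zeta nu2 ->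
      nu1 = nu2 \/ nu1 = pscal (-1) nu2.

Definition chord_length (K : pt -> Prop) (zeta nu : pt) (h : R) : Prop :=
  0 <= h /\ forall t, K (padd zeta (pscal t nu)) <-> (- h <= t <= 0).

Definition local_depth (K : pt -> Prop) (zeta : pt) (h : R) : Prop :=
  (exists nu, outer_normal K zeta nu /\ chord_length K zeta nu h) /\
  (forall nu h', outer_normal K zeta nu -> chord_length K zeta nu h' -> h' <= h).

Definition is_glb (E : R -> Prop) (m : R) : Prop :=
  (forall x, E x -> m <= x) /\ (forall b, (forall x, E x -> b <= x) -> b <= m).

Definition depth (K : pt -> Prop) (d : R) : Prop :=
  is_glb (fun h => exists zeta, boundary K zeta /\ local_depth K zeta h) d.

(* Main.v *)
From Pilot Require Import Defs.
From Stdlib Require Import Reals Lra Lia Psatz Classical ClassicalEpsilon.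
Import Pilot.Defs.
Open Scope R_scope.

Lemma dot_self_ge0 v : 0 <= dot v v.
Proof. unfold dot; nra. Qed.

Lemma pnorm1 v : pnorm v = 1 <-> dot v v = 1.
Proof.
  unfold pnorm; split; intro H.
  - rewrite <- (sqrt_sqrt (dot v v)) by apply dot_self_ge0. rewrite H; ring.
  - rewrite H; apply sqrt_1.
Qed.

Lemma pnorm_sq v : pnorm v * pnorm v = dot v v.
Proof. unfold pnorm; apply sqrt_sqrt, dot_self_ge0. Qed.

Lemma pnorm_ge0 v : 0 <= pnorm v.
Proof. apply sqrt_pos. Qed.

Lemma pnorm_scal t v : pnorm (pscal t v) = Rabs t * pnorm v.
Proof.
  unfold pnorm. replace (dot (pscal t v) (pscal t v)) with (Rsqr t * dot v v)
    by (unfold dot, pscal, Rsqr; simpl; ring).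
  rewrite sqrt_mult by (try apply Rle_0_sqr; apply dot_self_ge0).
  rewrite sqrt_Rsqr_abs; reflexivity.
Qed.

Lemma dist_small w z e :
  Rabs (fst w - fst z) < e -> Rabs (snd w - snd z) < e -> dist w z < 2 * e.
Proof.
  intros H1 H2. unfold dist, pnorm, dot, psub; simpl.
  apply Rabs_def2 in H1; apply Rabs_def2 in H2.
  assert (He : 0 < e) by lra.
  rewrite <- (sqrt_square (2 * e)) by lra.
  set (a := fst w - fst z) in *. set (b := snd w - snd z) in *.
  assert (a*a < e*e) by nra. assert (b*b < e*e) by nra.
  apply sqrt_lt_1; nra.
Qed.

Lemma coord_bound p M : pnorm p <= M -> Rabs (fst p) <= M /\ Rabs (snd p) <= M.
Proof.
  intro H. pose proof (pnorm_sq p) as Hs. pose proof (pnorm_ge0 p).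
  destruct p as [a b]; unfold dot in Hs; simpl in *.
  assert (a*a <= M*M) by nra. assert (b*b <= M*M) by nra.
  split; apply Rabs_le; split; nra.
Qed.

Lemma dot_bound p nu M : pnorm p <= M -> dot nu nu = 1 -> Rabs (dot p nu) <= M.
Proof.
  intros H Hn. pose proof (pnorm_sq p) as Hs. pose proof (pnorm_ge0 p).
  destruct p as [a b], nu as [c d]; unfold dot in *; simpl in *.
  assert (E : (a*c+b*d)*(a*c+b*d) + (a*d-b*c)*(a*d-b*c) = (a*a+b*b)*(c*c+d*d)) by ring.
  rewrite Hn in E.
  assert ((a*c+b*d)*(a*c+b*d) <= (a*a+b*b)) by (pose proof (Rle_0_sqr (a*d-b*c)); unfold Rsqr in *; lra).
  set (P := pnorm (a,b)) in *.
  assert (0 <= M) by lra.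
  apply Rabs_le; split; nra.
Qed.
Lemma Rabs_le_inv a b : Rabs a <= b -> -b <= a <= b.
Proof. unfold Rabs; destruct (Rcase_abs a); lra. Qed.

Lemma arch_inv eps : 0 < eps -> exists N, / (INR N + 1) < eps.
Proof.
  intro He. destruct (archimed_cor1 eps He) as [N [H1 H2]]. exists N.
  apply lt_0_INR in H2.
  apply Rle_lt_trans with (/ INR N); [|exact H1].
  apply Rinv_le_contravar; lra.
Qed.

Lemma inv_mono (k n : nat) : (k <= n)%nat -> / (INR n + 1) <= / (INR k + 1).
Proof.
  intro H. apply le_INR in H. pose proof (pos_INR k).
  apply Rinv_le_contravar; lra.
Qed.

Lemma extract (u : nat -> R) M : (forall n, Rabs (u n) <= M) ->
  exists (phi : nat -> nat) l, (forall k, (k <= phi k)%nat) /\ Un_cv (fun k => u (phi k)) l.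
Proof.
  intro HM.
  destruct (Bolzano_Weierstrass u (fun c => -M <= c <= M) (compact_P3 (-M) M)) as [l Hl].
  { intro n; specialize (HM n); apply Rabs_le_inv in HM; lra. }
  assert (Hk : forall k, exists p, (k <= p)%nat /\ Rabs (u p - l) < / (INR k + 1)).
  { intro k. assert (Hpos : 0 < / (INR k + 1)).
    { apply Rinv_0_lt_compat; pose proof (pos_INR k); lra. }
    destruct (Hl (disc l (mkposreal _ Hpos)) k) as [p [Hp1 Hp2]].
    - exists (mkposreal _ Hpos). intros x Hx; exact Hx.
    - exists p; split; [exact Hp1| exact Hp2]. }
  exists (fun k => proj1_sig (constructive_indefinite_description _ (Hk k))), l.
  split.
  - intro k. exact (proj1 (proj2_sig (constructive_indefinite_description _ (Hk k)))).
  - intros eps He. destruct (arch_inv eps He) as [N HN]. exists N. intros n Hn.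
    unfold Rdist. pose proof (proj2 (proj2_sig (constructive_indefinite_description _ (Hk n)))) as Hp.
    pose proof (inv_mono N n Hn). lra.
Qed.

Lemma subseq_cv (v : nat -> R) l (psi : nat -> nat) :
  Un_cv v l -> (forall k, (k <= psi k)%nat) -> Un_cv (fun k => v (psi k)) l.
Proof.
  intros H Hp eps He. destruct (H eps He) as [N HN]. exists N.
  intros n Hn. apply HN. specialize (Hp n). lia.
Qed.

Lemma cvc c : Un_cv (fun _ => c) c.
Proof. intros eps He. exists 0%nat. intros. unfold Rdist. rewrite Rminus_diag, Rabs_R0. lra. Qed.

Lemma interior_comb K p c t : convex_set K -> interior K c -> K p -> 0 < t <= 1 ->
  interior K (padd (pscal (1-t) p) (pscal t c)).
Proof.
  intros Hc [r [Hr Hball]] Hp Ht.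
  exists (t * r). split; [nra|]. intros w Hw.
  set (q := padd (pscal (1-t) p) (pscal t c)) in *.
  set (v := padd c (pscal (/t) (psub w q))).
  assert (Kv : K v).
  { apply Hball. unfold dist.
    replace (psub v c) with (pscal (/t) (psub w q)).
    2:{ unfold v, psub, padd, pscal; simpl. f_equal; ring. }
    rewrite pnorm_scal. fold (dist w q). rewrite Rabs_right.
    2:{ left; apply Rinv_0_lt_compat; lra. }
    apply Rmult_lt_reg_l with t; [lra|]. rewrite <- Rmult_assoc, Rinv_r by lra. lra. }
  specialize (Hc p v t Hp Kv (conj (Rlt_le _ _ (proj1 Ht)) (proj2 Ht))).
  replace w with (padd (pscal (1 - t) p) (pscal t v)); [exact Hc|].
  unfold v, q, psub, padd, pscal; destruct w, p, c; simpl. f_equal; field; lra.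
Qed.

Lemma normal_neg K c zeta nu : interior K c -> outer_normal K zeta nu ->
  dot (psub c zeta) nu < 0.
Proof.
  intros [r [Hr Hball]] [Hn Hnu].
  assert (Kv : K (padd c (pscal (r/2) nu))).
  { apply Hball. unfold dist.
    replace (psub (padd c (pscal (r / 2) nu)) c) with (pscal (r/2) nu)
      by (unfold psub, padd, pscal; simpl; f_equal; ring).
    rewrite pnorm_scal, Hn, Rabs_right by lra. lra. }
  specialize (Hnu _ Kv). apply pnorm1 in Hn.
  replace (dot (psub (padd c (pscal (r / 2) nu)) zeta) nu)
    with (dot (psub c zeta) nu + r/2 * dot nu nu) in Hnu
    by (unfold dot, psub, padd, pscal; simpl; ring).
  rewrite Hn in Hnu. lra.
Qed.

Lemma normal_not_interior K zeta nu : outer_normal K zeta nu -> ~ interior K zeta.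
Proof.
  intros Hn Hi. pose proof (normal_neg K zeta zeta nu Hi Hn).
  unfold dot, psub in H; simpl in H. lra.
Qed.

Definition rot (nu : pt) : pt := (- snd nu, fst nu).

Lemma orth_not_pm v nu : dot nu nu = 1 -> dot v nu = 0 -> v = nu \/ v = pscal (-1) nu -> False.
Proof.
  intros H1 H0 [E|E]; subst v.
  - lra.
  - unfold dot, pscal in *; simpl in *. lra.
Qed.

Lemma inward K c zeta nu : convex_set K -> smooth K -> interior K c -> boundary K zeta ->
  outer_normal K zeta nu -> exists s, 0 < s /\ interior K (padd zeta (pscal (-s) nu)).
Proof.
  intros Hcv Hsm Hc Hb Hnu.
  pose proof (normal_neg K c zeta nu Hc Hnu) as Yc.
  pose proof (proj1 (pnorm1 nu) (proj1 Hnu)) as Hn1.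
  set (tau := rot nu).
  set (X := fun p => dot (psub p zeta) tau).
  set (Y := fun p => dot (psub p zeta) nu).
  assert (decomp : forall p, X p = 0 -> p = padd zeta (pscal (Y p) nu)).
  { intros [p1 p2] HX. destruct zeta as [z1 z2], nu as [n1 n2].
    unfold X, Y, tau, rot, dot, psub, padd, pscal in *; simpl in *.
    set (a := p1 - z1) in *. set (b := p2 - z2) in *.
    assert (E1 : (a*n1+b*n2)*n1 - a = a*(n1*n1+n2*n2-1) + n2*(b*n1 - a*n2)) by ring.
    assert (E2 : (a*n1+b*n2)*n2 - b = b*(n1*n1+n2*n2-1) - n1*(b*n1 - a*n2)) by ring.
    assert (HX' : b*n1 - a*n2 = 0) by lra.
    rewrite Hn1, HX' in E1, E2.
    f_equal; unfold a, b in *; lra. }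
  assert (affX : forall p q t, X (padd (pscal (1-t) p) (pscal t q)) = (1-t) * X p + t * X q).
  { intros. unfold X, dot, psub, padd, pscal; simpl; ring. }
  assert (affY : forall p q t, Y (padd (pscal (1-t) p) (pscal t q)) = (1-t) * Y p + t * Y q).
  { intros. unfold Y, dot, psub, padd, pscal; simpl; ring. }
  assert (fin : forall q, interior K q -> X q = 0 -> Y q < 0 ->
            exists s, 0 < s /\ interior K (padd zeta (pscal (-s) nu))).
  { intros q Hq HX HY. exists (- Y q). split; [lra|].
    rewrite Ropp_involutive, <- (decomp q HX). exact Hq. }
  destruct (Req_dec (X c) 0) as [Xc0|Xc0].
  { apply (fin c Hc Xc0 Yc). }
  destruct (classic (exists p, K p /\ X p * X c < 0)) as [[p [Kp Hp]]|Hno].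
  - set (t := X p / (X p - X c)).
    assert (Hden : X p - X c <> 0) by (intro E; assert (X p = X c) by lra; nra).
    assert (Ht : 0 < t < 1).
    { unfold t. destruct (Rlt_or_le (X c) 0).
      - assert (0 < X p) by nra. split.
        + apply Rdiv_lt_0_compat; lra.
        + apply (Rmult_lt_reg_r (X p - X c)); [lra|].
          unfold Rdiv; rewrite Rmult_assoc, Rinv_l, Rmult_1_r; lra.
      - assert (X p < 0) by nra. split.
        + replace (X p / (X p - X c)) with ((- X p) / (X c - X p)) by (field; lra).
          apply Rdiv_lt_0_compat; lra.
        + replace (X p / (X p - X c)) with ((- X p) / (X c - X p)) by (field; lra).
          apply (Rmult_lt_reg_r (X c - X p)); [lra|].
          unfold Rdiv; rewrite Rmult_assoc, Rinv_l, Rmult_1_r; lra. }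
    apply (fin (padd (pscal (1-t) p) (pscal t c))).
    + apply interior_comb; auto; lra.
    + rewrite affX. unfold t. field. exact Hden.
    + rewrite affY. assert (Y p <= 0) by (apply (proj2 Hnu); exact Kp).
      fold (Y c) in Yc. nra.
  - exfalso.
    assert (Hall : forall p, K p -> 0 <= X p * X c).
    { intros p Kp. apply Rnot_lt_le. intro Hlt. apply Hno. exists p; auto. }
    assert (Htt : dot tau tau = 1) by (unfold tau, rot, dot in *; simpl; lra).
    destruct (Rlt_or_le 0 (X c)) as [Xpos|Xneg].
    + assert (Hm : outer_normal K zeta (pscal (-1) tau)).
      { split.
        - apply pnorm1. unfold dot, pscal in *; simpl in *; lra.
        - intros z Kz. specialize (Hall z Kz).
          assert (0 <= X z) by nra.
          unfold X, dot, psub, pscal in *; simpl in *; lra. }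
      apply (orth_not_pm (pscal (-1) tau) nu Hn1).
      * unfold tau, rot, dot, pscal; simpl; ring.
      * exact (Hsm zeta Hb _ _ Hm Hnu).
    + assert (Xneg' : X c < 0) by lra.
      assert (Hm : outer_normal K zeta tau).
      { split.
        - apply pnorm1. exact Htt.
        - intros z Kz. specialize (Hall z Kz).
          assert (X z <= 0) by nra. exact H. }
      apply (orth_not_pm tau nu Hn1).
      * unfold tau, rot, dot; simpl; ring.
      * exact (Hsm zeta Hb _ _ Hm Hnu).
Qed.

Lemma psub_line zeta t nu : psub (padd zeta (pscal t nu)) zeta = pscal t nu.
Proof. unfold psub, padd, pscal; simpl; f_equal; ring. Qed.

Lemma chord_exists K zeta nu : closed_set K -> bounded_set K -> convex_set K -> K zeta ->
  outer_normal K zeta nu -> exists h, chord_length K zeta nu h.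
Proof.
  intros Hcl [M HM] Hcv Kz [Hn Hnu].
  pose proof (proj1 (pnorm1 nu) Hn) as Hn1.
  set (T := fun t => K (padd zeta (pscal t nu))).
  assert (T0 : T 0).
  { unfold T. replace (padd zeta (pscal 0 nu)) with zeta; [exact Kz|].
    unfold padd, pscal; destruct zeta; simpl; f_equal; ring. }
  assert (Tneg : forall t, T t -> t <= 0).
  { intros t Ht. specialize (Hnu _ Ht). rewrite psub_line in Hnu.
    unfold dot, pscal in *; simpl in *. nra. }
  set (E := fun u => T (- u)).
  assert (Hbd : bound E).
  { exists (M + dot zeta nu). intros u Hu.
    pose proof (dot_bound _ nu M (HM _ Hu) Hn1) as Hd.
    apply Rabs_le_inv in Hd.
    replace (dot (padd zeta (pscal (- u) nu)) nu) with (dot zeta nu - u * dot nu nu) in Hd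
      by (unfold dot, padd, pscal; simpl; ring).
    rewrite Hn1 in Hd. lra. }
  assert (HE : exists u, E u) by (exists 0; unfold E; rewrite Ropp_0; exact T0).
  destruct (completeness E Hbd HE) as [h [Hub Hlub]].
  assert (Hh0 : 0 <= h) by (apply Hub; unfold E; rewrite Ropp_0; exact T0).
  assert (Th : T (- h)).
  { apply Hcl. intros r Hr.
    assert (exists u, E u /\ h - r < u) as [u [Eu Hu]].
    { apply NNPP. intro Hno. assert (h <= h - r); [|lra].
      apply Hlub. intros u Eu. apply Rnot_lt_le. intro Hlt. apply Hno. eauto. }
    exists (padd zeta (pscal (- u) nu)). split; [exact Eu|].
    assert (u <= h) by (apply Hub; exact Eu).
    unfold dist. replace (psub (padd zeta (pscal (- u) nu)) (padd zeta (pscal (- h) nu)))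
      with (pscal (h - u) nu) by (unfold psub, padd, pscal; simpl; f_equal; ring).
    rewrite pnorm_scal, Hn, Rabs_right by lra. lra. }
  exists h. split; [exact Hh0|]. intro t. split.
  - intro Ht. split.
    + assert (- t <= h) by (apply Hub; unfold E; rewrite Ropp_involutive; exact Ht). lra.
    + apply Tneg; exact Ht.
  - intros [Ht1 Ht2]. destruct (Req_dec h 0) as [H0|H0].
    + assert (t = 0) by lra. subst t. exact T0.
    + set (lam := - t / h).
      assert (Hl : 0 <= lam <= 1).
      { unfold lam. split.
        - unfold Rdiv. apply Rmult_le_pos; [lra|]. left; apply Rinv_0_lt_compat; lra.
        - apply (Rmult_le_reg_r h); [lra|]. unfold Rdiv. rewrite Rmult_assoc, Rinv_l; lra. }
      pose proof (Hcv _ _ lam Kz Th Hl) as Hc.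
      replace (padd (pscal (1 - lam) zeta) (pscal lam (padd zeta (pscal (- h) nu))))
        with (padd zeta (pscal t nu)) in Hc; [exact Hc|].
      unfold lam, padd, pscal; destruct zeta, nu; simpl; f_equal; field; lra.
Qed.

Lemma cv_ext (u v : nat -> R) l : (forall n, u n = v n) -> Un_cv u l -> Un_cv v l.
Proof. intros H Hu eps He. destruct (Hu eps He) as [N HN]. exists N. intros n Hn. rewrite <- H. auto. Qed.

Lemma K_closure K z : K z -> closure K z.
Proof.
  intros Kz r Hr. exists z. split; [exact Kz|]. unfold dist, pnorm, dot, psub; simpl.
  replace ((fst z - fst z) * (fst z - fst z) + (snd z - snd z) * (snd z - snd z)) with 0 by ring.
  rewrite sqrt_0; exact Hr.
Qed.

Lemma boundary_K K z : closed_set K -> boundary K z -> K z.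
Proof. intros Hc [Hz _]. apply Hc, Hz. Qed.

Lemma cv_both (x y : nat -> R) a b e : Un_cv x a -> Un_cv y b -> 0 < e ->
  exists N, forall n, (n >= N)%nat -> Rabs (x n - a) < e /\ Rabs (y n - b) < e.
Proof.
  intros Hx Hy He. destruct (Hx e He) as [N1 H1]. destruct (Hy e He) as [N2 H2].
  exists (max N1 N2). intros n Hn. split; [apply H1|apply H2]; lia.
Qed.

Lemma lower_bound K : convex_domain K -> smooth K ->
  exists delta, 0 < delta /\ forall zeta nu h, boundary K zeta -> outer_normal K zeta nu ->
    chord_length K zeta nu h -> delta <= h.
Proof.
  intros [[Hcl [M HM]] [Hcv [c Hc]]] Hsm.
  apply NNPP. intro Hcon.
  assert (Hseq : forall n : nat, exists q : pt * pt * R,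
    boundary K (fst (fst q)) /\ outer_normal K (fst (fst q)) (snd (fst q)) /\
    chord_length K (fst (fst q)) (snd (fst q)) (snd q) /\ snd q < / (INR n + 1)).
  { intro n. apply NNPP. intro Hno. apply Hcon. exists (/ (INR n + 1)). split.
    { apply Rinv_0_lt_compat; pose proof (pos_INR n); lra. }
    intros z v h Hb Hv Hch. apply Rnot_lt_le. intro Hlt. apply Hno.
    exists (z, v, h); simpl; auto. }
  set (Q := fun n => proj1_sig (constructive_indefinite_description _ (Hseq n))).
  assert (HQ : forall n, boundary K (fst (fst (Q n))) /\ outer_normal K (fst (fst (Q n))) (snd (fst (Q n))) /\
    chord_length K (fst (fst (Q n))) (snd (fst (Q n))) (snd (Q n)) /\ snd (Q n) < / (INR n + 1)).
  { intro n. exact (proj2_sig (constructive_indefinite_description _ (Hseq n))). }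
  clearbody Q. clear Hseq.
  set (Z := fun n => fst (fst (Q n))). set (V := fun n => snd (fst (Q n))).
  set (Hh := fun n => snd (Q n)).
  assert (BZ : forall n, Rabs (fst (Z n)) <= M /\ Rabs (snd (Z n)) <= M).
  { intro n. apply coord_bound, HM, boundary_K; [exact Hcl|]. apply (HQ n). }
  assert (BV : forall n, Rabs (fst (V n)) <= 1 /\ Rabs (snd (V n)) <= 1).
  { intro n. apply coord_bound. destruct (HQ n) as [_ [[Hn _] _]]. unfold V; lra. }
  destruct (extract (fun n => fst (Z n)) M (fun n => proj1 (BZ n))) as [p1 [a1 [Hp1 C1]]].
  destruct (extract (fun k => snd (Z (p1 k))) M (fun n => proj2 (BZ _))) as [p2 [a2 [Hp2 C2]]].
  destruct (extract (fun k => fst (V (p1 (p2 k)))) 1 (fun n => proj1 (BV _))) as [p3 [b1 [Hp3 C3]]].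
  destruct (extract (fun k => snd (V (p1 (p2 (p3 k))))) 1 (fun n => proj2 (BV _))) as [p4 [b2 [Hp4 C4]]].
  set (S := fun k => p1 (p2 (p3 (p4 k)))).
  assert (HS : forall k, (k <= S k)%nat).
  { intro k. unfold S. specialize (Hp4 k). specialize (Hp3 (p4 k)). specialize (Hp2 (p3 (p4 k))).
    specialize (Hp1 (p2 (p3 (p4 k)))). lia. }
  assert (D1 : Un_cv (fun k => fst (Z (S k))) a1).
  { apply (subseq_cv (fun k => fst (Z (p1 k))) a1 (fun k => p2 (p3 (p4 k)))); auto.
    intro k. specialize (Hp4 k). specialize (Hp3 (p4 k)). specialize (Hp2 (p3 (p4 k))). lia. }
  assert (D2 : Un_cv (fun k => snd (Z (S k))) a2).
  { apply (subseq_cv (fun k => snd (Z (p1 (p2 k)))) a2 (fun k => p3 (p4 k))); auto.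
    intro k. specialize (Hp4 k). specialize (Hp3 (p4 k)). lia. }
  assert (D3 : Un_cv (fun k => fst (V (S k))) b1).
  { apply (subseq_cv (fun k => fst (V (p1 (p2 (p3 k))))) b1 p4); auto. }
  assert (D4 : Un_cv (fun k => snd (V (S k))) b2) by exact C4.
  clear C1 C2 C3 C4.
  set (zs := (a1, a2)). set (vs := (b1, b2)).
  assert (Kzs : K zs).
  { apply Hcl. intros r Hr.
    destruct (cv_both _ _ a1 a2 (r/2) D1 D2) as [N HN]; [lra|].
    exists (Z (S N)). split.
    - apply boundary_K; [exact Hcl|]. apply (HQ (S N)).
    - destruct (HN N (le_n N)) as [H1 H2].
      replace r with (2 * (r/2)) by field. apply dist_small; exact H1 || exact H2. }
  assert (Hvs1 : dot vs vs = 1).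
  { assert (Cv : Un_cv (fun k => fst (V (S k)) * fst (V (S k)) + snd (V (S k)) * snd (V (S k)))
                   (b1 * b1 + b2 * b2)).
    { apply CV_plus; apply CV_mult; assumption. }
    apply cv_ext with (v := fun _ => 1) in Cv.
    - unfold dot, vs; simpl. symmetry. apply (UL_sequence (fun _ => 1)); [apply cvc|exact Cv].
    - intro n. destruct (HQ (S n)) as [_ [[Hn _] _]]. apply pnorm1 in Hn. exact Hn. }
  assert (Hvs : outer_normal K zs vs).
  { split; [apply pnorm1; exact Hvs1|]. intros z Kz.
    assert (Cv : Un_cv (fun k => (fst z - fst (Z (S k))) * fst (V (S k)) + (snd z - snd (Z (S k))) * snd (V (S k)))
                   ((fst z - a1) * b1 + (snd z - a2) * b2)).
    { apply CV_plus; apply CV_mult; try assumption; apply CV_minus; try assumption; apply cvc. }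
    unfold dot, psub, zs, vs; simpl.
    eapply Rle_cv_lim; [|exact Cv|exact (cvc 0)].
    intro n. destruct (HQ (S n)) as [_ [[_ Hn] _]]. apply (Hn z Kz). }
  assert (Hbz : boundary K zs).
  { split; [apply K_closure; exact Kzs|]. apply (normal_not_interior K zs vs Hvs). }
  destruct (inward K c zs vs Hcv Hsm Hc Hbz Hvs) as [s [Hs [rho [Hrho Hball]]]].
  assert (CP1 : Un_cv (fun k => fst (Z (S k)) + (- s) * fst (V (S k))) (a1 + (-s) * b1)).
  { apply CV_plus; [assumption|]. apply CV_mult; [apply cvc|assumption]. }
  assert (CP2 : Un_cv (fun k => snd (Z (S k)) + (- s) * snd (V (S k))) (a2 + (-s) * b2)).
  { apply CV_plus; [assumption|]. apply CV_mult; [apply cvc|assumption]. }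
  destruct (cv_both _ _ _ _ (rho/2) CP1 CP2) as [N1 HN1]; [lra|].
  destruct (arch_inv s Hs) as [N2 HN2].
  set (n := max N1 N2).
  destruct (HN1 n ltac:(unfold n; lia)) as [E1 E2].
  assert (Kp : K (padd (Z (S n)) (pscal (- s) (V (S n))))).
  { apply Hball. replace rho with (2 * (rho/2)) by field. apply dist_small.
    - unfold padd, pscal, zs, vs; simpl. exact E1.
    - unfold padd, pscal, zs, vs; simpl. exact E2. }
  destruct (HQ (S n)) as [_ [_ [[_ Hch] Hlt]]].
  apply Hch in Kp.
  pose proof (inv_mono N2 (S n) ltac:(specialize (HS n); unfold n in *; lia)).
  unfold Z, V in *. lra.
Qed.

Lemma interior_K K c : interior K c -> K c.
Proof.
  intros [r [Hr Hb]]. apply Hb. unfold dist, pnorm, dot, psub; simpl.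
  replace ((fst c - fst c) * (fst c - fst c) + (snd c - snd c) * (snd c - snd c)) with 0 by ring.
  rewrite sqrt_0; exact Hr.
Qed.

Lemma local_depth_of K c zeta nu h : smooth K -> interior K c -> boundary K zeta ->
  outer_normal K zeta nu -> chord_length K zeta nu h -> local_depth K zeta h.
Proof.
  intros Hsm Hc Hb Hnu Hch. split; [exists nu; auto|].
  intros nu' h' Hnu' Hch'. destruct (Hsm zeta Hb nu' nu Hnu' Hnu) as [E|E]; subst nu'.
  - destruct Hch' as [Hh' Hch']. assert (K (padd zeta (pscal (- h') nu))) by (apply Hch'; lra).
    apply (proj2 Hch) in H. lra.
  - pose proof (normal_neg K c zeta nu Hc Hnu).
    pose proof (normal_neg K c zeta _ Hc Hnu').
    unfold dot, pscal in *; simpl in *. lra.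
Qed.

Lemma exists_bpoint K : convex_domain K -> smooth K ->
  exists zeta h, boundary K zeta /\ local_depth K zeta h.
Proof.
  intros [[Hcl [M HM]] [Hcv [c Hc]]] Hsm.
  set (E := fun x => exists p, K p /\ fst p = x).
  assert (Hbd : bound E).
  { exists M. intros x [p [Kp <-]]. pose proof (coord_bound p M (HM p Kp)) as [H1 _].
    apply Rabs_le_inv in H1; lra. }
  assert (HE : exists x, E x) by (exists (fst c), c; split; [apply interior_K; auto|reflexivity]).
  destruct (completeness E Hbd HE) as [M0 [Hub Hlub]].
  assert (Hseq : forall n : nat, exists p, K p /\ M0 - / (INR n + 1) < fst p).
  { intro n. apply NNPP. intro Hno.
    assert (Hpos : 0 < / (INR n + 1)) by (apply Rinv_0_lt_compat; pose proof (pos_INR n); lra).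
    assert (M0 <= M0 - / (INR n + 1)); [|lra].
    apply Hlub. intros x [p [Kp <-]]. apply Rnot_lt_le. intro Hlt. apply Hno. eauto. }
  set (P := fun n => proj1_sig (constructive_indefinite_description _ (Hseq n))).
  assert (HP : forall n, K (P n) /\ M0 - / (INR n + 1) < fst (P n)).
  { intro n. exact (proj2_sig (constructive_indefinite_description _ (Hseq n))). }
  clearbody P. clear Hseq.
  destruct (extract (fun n => snd (P n)) M (fun n => proj2 (coord_bound _ _ (HM _ (proj1 (HP n))))))
    as [phi [b [Hphi Cb]]].
  set (z := (M0, b)).
  assert (Kz : K z).
  { apply Hcl. intros r Hr.
    destruct (Cb (r/2) ltac:(lra)) as [N1 HN1].
    destruct (arch_inv (r/2) ltac:(lra)) as [N2 HN2].
    set (n := max N1 N2).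
    exists (P (phi n)). destruct (HP (phi n)) as [Kp Hp]. split; [exact Kp|].
    replace r with (2 * (r/2)) by field. apply dist_small.
    - unfold z; simpl.
      assert (fst (P (phi n)) <= M0) by (apply Hub; exists (P (phi n)); auto).
      pose proof (inv_mono N2 (phi n) ltac:(specialize (Hphi n); unfold n in *; lia)).
      apply Rabs_def1; lra.
    - unfold z; simpl. apply (HN1 n). unfold n; lia. }
  assert (Hnu : outer_normal K z (1, 0)).
  { split.
    - apply pnorm1. unfold dot; simpl; ring.
    - intros p Kp. unfold dot, psub, z; simpl.
      assert (fst p <= M0) by (apply Hub; exists p; auto). lra. }
  assert (Hb : boundary K z).
  { split; [apply K_closure; exact Kz|]. apply (normal_not_interior K z (1,0) Hnu). }
  destruct (chord_exists K z (1,0) Hcl (ex_intro _ M HM) Hcv Kz Hnu) as [h Hch].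
  exists z, h. split; [exact Hb|]. apply (local_depth_of K c z (1,0) h); auto.
Qed.

Theorem corollary1 (K : pt -> Prop) :
  convex_domain K -> smooth K -> exists d, depth K d /\ 0 < d.
Proof.
  intros Hd Hsm.
  destruct (lower_bound K Hd Hsm) as [delta [Hdel Hlow]].
  destruct (exists_bpoint K Hd Hsm) as [z0 [h0 [Hb0 Hl0]]].
  set (E := fun u => exists zeta, boundary K zeta /\ local_depth K zeta (- u)).
  assert (Hlow' : forall zeta h, boundary K zeta -> local_depth K zeta h -> delta <= h).
  { intros zeta h Hb [[nu [Hnu Hch]] _]. exact (Hlow zeta nu h Hb Hnu Hch). }
  assert (Hbd : bound E).
  { exists (- delta). intros u [zeta [Hb Hl]]. pose proof (Hlow' _ _ Hb Hl). lra. }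
  assert (HE : exists u, E u) by (exists (- h0), z0; rewrite Ropp_involutive; auto).
  destruct (completeness E Hbd HE) as [m [Hub Hlub]].
  exists (- m). split.
  - split.
    + intros x [zeta [Hb Hl]]. assert (- x <= m); [|lra].
      apply Hub. exists zeta. rewrite Ropp_involutive. auto.
    + intros b Hb. assert (m <= - b); [|lra].
      apply Hlub. intros u [zeta [Hbz Hl]]. pose proof (Hb (- u) (ex_intro _ zeta (conj Hbz Hl))). lra.
  - assert (m <= - delta); [|lra]. apply Hlub. intros u [zeta [Hb Hl]].
    pose proof (Hlow' _ _ Hb Hl). lra.
Qed.
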